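(* Let $\mathcal{G}=(V,\mathcal{E},T)$ be a happy temporally connected temporal graph, and let $X$ be a vertex cover of its underlying graph $G_U$ with $|X|=d$. Let $\mathcal{S}$ be a minimum temporal spanner of $\mathcal{G}$ (one with the minimum number of time edges). Then the set of time edges of $\mathcal{S}$ is the union of the time-edge sets of at most $d$ temporal out-trees, each rooted at a vertex of $X$, together with at most one extra time edge incident to each vertex of $V\setminus X$.
   Context: A temporal graph is a triple $\mathcal{G}=(V,\mathcal{E},T)$ with finite vertex set $V$, time edges $\mathcal{E}\subseteq\binom{V}{2}\times\{1,\dots,T\}$ and maximum label $T$; its underlying graph $G_U$ has edge set $\{e:\exists t,(e,t)\in\mathcal{E}\}$. $\mathcal{G}$ is happy if every underlying edge has exactly one label and no two time edges sharing an endpoint have the same label (so time edges and underlying edges can be identified). A temporal path is a sequence of time edges $(e_1,t_1),\dots,(e_r,t_r)$ such that $e_1,\dots,e_r$ form a static path and $t_1<\dots<t_r$. $\mathcal{G}$ is temporally connected if every vertex has a temporal path to every other vertex. A temporal spanner of $\mathcal{G}$ is a temporally connected $(V,\mathcal{E}',T')$ with $\mathcal{E}'\subseteq\mathcal{E}$, $T'\le T$. A temporal out-tree rooted at $r$ (in $\mathcal{G}$) is a temporal subgraph $(V,\mathcal{E}_r,T)$, $\mathcal{E}_r\subseteq\mathcal{E}$, whose underlying graph is a spanning tree of $V$ and in which $r$ has a temporal path to every vertex of $V$. *)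

(* Defs.v *)
From mathcomp Require Import all_boot.
Set Implicit Arguments. Unset Strict Implicit. Unset Printing Implicit Defensive.

(* A time edge over vertex type V with labels in {0..T}: an (unordered) vertex
   set (required to have size 2) together with a label (required to be >= 1). *)
Notation tedge V T := ({set V} * 'I_T.+1)%type.

Section Temporal.
Variables (V : finType) (T : nat).

Definition wf_tgraph (E : {set tedge V T}) : Prop :=
  forall p, p \in E -> #|p.1| = 2 /\ (0 < p.2)%N.

Definition happy (E : {set tedge V T}) : Prop :=
  [/\ wf_tgraph E,
      (forall e (t t' : 'I_T.+1), (e, t) \in E -> (e, t') \in E -> t = t')
    & (forall e e' (t : 'I_T.+1), (e, t) \in E -> (e', t) \in E -> e != e' ->
         [disjoint e & e'])].

Definition tpath (E : {set tedge V T}) (u v : V) : Prop :=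
  exists (xs : seq V) (ts : seq 'I_T.+1),
    [/\ size ts = size xs, uniq (u :: xs), last u xs = v,
        sorted ltn (map val ts)
      & forall i, (i < size xs)%N ->
          ([set nth u (u :: xs) i; nth u (u :: xs) i.+1],
           nth ord0 ts i) \in E].

Definition tconnected (E : {set tedge V T}) : Prop :=
  forall u v, u != v -> tpath E u v.

Definition tspanner (E S : {set tedge V T}) : Prop :=
  S \subset E /\ tconnected S.

Definition min_tspanner (E S : {set tedge V T}) : Prop :=
  tspanner E S /\ forall S', tspanner E S' -> #|S| <= #|S'|.

Definition underlying (E : {set tedge V T}) : {set {set V}} :=
  [set p.1 | p in E].

Definition spath (U : {set {set V}}) (u v : V) : Prop :=
  exists xs : seq V,
    [/\ uniq (u :: xs), last u xs = v
      & forall i, (i < size xs)%N ->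
          [set nth u (u :: xs) i; nth u (u :: xs) i.+1] \in U].

Definition acyclic (U : {set {set V}}) : Prop :=
  forall (x : V) (xs : seq V), (2 <= size xs)%N -> uniq (x :: xs) ->
    (forall i, (i < size xs)%N ->
       [set nth x (x :: xs) i; nth x (x :: xs) i.+1] \in U) ->
    [set last x xs; x] \notin U.

Definition spanning_tree (U : {set {set V}}) : Prop :=
  (forall u v, spath U u v) /\ acyclic U.

Definition out_tree (E : {set tedge V T}) (r : V) (Er : {set tedge V T}) : Prop :=
  [/\ Er \subset E, spanning_tree (underlying Er)
    & forall v, v != r -> tpath Er r v].

Definition vertex_cover (E : {set tedge V T}) (X : {set V}) : Prop :=
  forall p, p \in E -> ~~ [disjoint p.1 & X].

End Temporal.

(* Main.v *)
Require Import Defs.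
From mathcomp Require Import all_boot.
From Stdlib Require Import ClassicalEpsilon.
Set Implicit Arguments. Unset Strict Implicit. Unset Printing Implicit Defensive.

Fixpoint tw {V : finType} {T : nat} (A : {set tedge V T}) (u : V) (s : nat)
  (l : seq (V * 'I_T.+1)) : Prop :=
  match l with
  | [::] => True
  | (y, t) :: l' => [/\ ([set u; y], t) \in A, s <= t & tw A y t.+1 l']
  end.

Definition nxt {V : finType} {T : nat} (s : nat) (l : seq (V * 'I_T.+1)) : nat :=
  last s [seq (val q.2).+1 | q <- l].

Definition treach {V : finType} {T : nat} (A : {set tedge V T}) (u : V) (s : nat) (v : V) :=
  exists l, [/\ tw A u s l, uniq (u :: map fst l) & last u (map fst l) = v].

Lemma tw_cat (V : finType) (T : nat) (A : {set tedge V T}) l1 l2 u s :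
  tw A u s (l1 ++ l2) <-> tw A u s l1 /\ tw A (last u (map fst l1)) (nxt s l1) l2.
Proof.
elim: l1 u s => [|[y t] l1 IH] u s /=; first by split=> [H|[]].
split.
  by case=> [H1 H2 /IH [H3 H4]].
by case=> [[H1 H2 H3] H4]; split=> //; apply/IH.
Qed.

Lemma tw_rcons (V : finType) (T : nat) (A : {set tedge V T}) l z t u s :
  tw A u s (rcons l (z, t)) <->
  [/\ tw A u s l, ([set last u (map fst l); z], t) \in A & nxt s l <= t].
Proof.
rewrite -cats1; split.
  by case/tw_cat=> [H1 [H2 H3 _]].
by case=> [H1 H2 H3]; apply/tw_cat.
Qed.

Lemma tw_mono (V : finType) (T : nat) (A : {set tedge V T}) l u s s' :
  s' <= s -> tw A u s l -> tw A u s' l.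
Proof.
case: l => [|[y t] l] //= Hs [H1 H2 H3]; split=> //; exact: leq_trans H2.
Qed.

Lemma tw_sub (V : finType) (T : nat) (A B : {set tedge V T}) l u s :
  A \subset B -> tw A u s l -> tw B u s l.
Proof.
move=> AB; elim: l u s => [|[y t] l IH] u s //= [H1 H2 H3]; split=> //.
  exact: (subsetP AB).
exact: IH.
Qed.

Lemma tw_all (V : finType) (T : nat) (A : {set tedge V T}) l u s :
  tw A u s l -> all (fun q => s <= val q.2) l.
Proof.
elim: l u s => [|[y t] l IH] u s //= [H1 H2 H3]; rewrite H2 /=.
apply/allP=> q /(allP (IH _ _ H3)) /=; apply: leq_trans; exact: leqW.
Qed.

Lemma tw_suffix (V : finType) (T : nat) (A : {set tedge V T}) l u s z :
  tw A u s l -> uniq (u :: map fst l) -> z \in map fst l ->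
  treach A z s.+1 (last u (map fst l)).
Proof.
elim: l u s => [|[y t] l IH] u s //= [H1 H2 H3] /andP [_ Hu].
rewrite inE; case/orP=> [/eqP ->|Hz].
  by exists l; split=> //; apply: tw_mono H3.
have [l2 [P1 P2 P3]] := IH _ _ H3 Hu Hz.
by exists l2; split=> //; apply: tw_mono P1; rewrite ltnS leqW.
Qed.

Lemma treach_sub (V : finType) (T : nat) (A B : {set tedge V T}) u s v :
  A \subset B -> treach A u s v -> treach B u s v.
Proof. by move=> AB [l [H1 H2 H3]]; exists l; split=> //; exact: tw_sub H1. Qed.

Lemma treach_mono (V : finType) (T : nat) (A : {set tedge V T}) u s s' v :
  s' <= s -> treach A u s v -> treach A u s' v.
Proof. by move=> Hs [l [H1 H2 H3]]; exists l; split=> //; exact: tw_mono H1. Qed.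

Lemma tw_sorted (V : finType) (T : nat) (A : {set tedge V T}) l u s :
  tw A u s l -> sorted ltn [seq val q.2 | q <- l].
Proof.
elim: l u s => [|[y t] l IH] u s //= [H1 H2 H3].
rewrite path_min_sorted; first exact: IH H3.
by rewrite all_map; apply/allP => q /(allP (tw_all H3)).
Qed.

Lemma tw_edges (V : finType) (T : nat) (A : {set tedge V T}) l u s :
  tw A u s l -> forall i, i < size l ->
  ([set nth u (u :: map fst l) i; nth u (u :: map fst l) i.+1],
   nth ord0 (map snd l) i) \in A.
Proof.
elim: l u s => [|[y t] l IH] u s //=.
move=> [H1 H2 H3] [|i] //= Hi.
have := IH _ _ H3 i Hi.
rewrite [nth u (y :: _) i](set_nth_default y u) /=; last by rewrite size_map ltnW.
by rewrite [nth u _ i](set_nth_default y u) // size_map.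
Qed.

Lemma treach_tpath (V : finType) (T : nat) (A : {set tedge V T}) u s v :
  treach A u s v -> tpath A u v.
Proof.
case=> l [H1 H2 H3]; exists (map fst l), (map snd l); split=> //.
- by rewrite !size_map.
- by rewrite -map_comp; exact: tw_sorted H1.
- move=> i; rewrite size_map => Hi; have := tw_edges H1 Hi. move=> HH. exact HH.
Qed.

Lemma tpath_tw (V : finType) (T : nat) (A : {set tedge V T}) xs (ts : seq 'I_T.+1) u s :
  size ts = size xs -> sorted ltn (map val ts) -> all (fun t => s <= val t) ts ->
  (forall i, i < size xs ->
    ([set nth u (u :: xs) i; nth u (u :: xs) i.+1], nth ord0 ts i) \in A) ->
  tw A u s (zip xs ts).
Proof.
elim: xs ts u s => [|y xs IH] [|t ts] u s //= [Hsz] Hso /andP [Hst Hall] He.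
split; first exact: (He 0).
  done.
apply: IH => //.
- exact: path_sorted Hso.
- have := order_path_min ltn_trans Hso; rewrite all_map.
  by move/allP=> H; apply/allP=> q /H.
- move=> i Hi; have := He i.+1 Hi; rewrite /=.
  rewrite [nth u (y :: _) i](set_nth_default y u) /=; last exact: ltnW.
  by rewrite [nth u _ i](set_nth_default y u).
Qed.

Lemma tpath_treach (V : finType) (T : nat) (A : {set tedge V T}) u v :
  tpath A u v -> treach A u 0 v.
Proof.
case=> xs [ts [Hsz Hu Hl Hso He]]; exists (zip xs ts).
have Hm : map fst (zip xs ts) = xs by rewrite -/(unzip1 _) unzip1_zip // Hsz.
rewrite Hm; split=> //; apply: tpath_tw => //.
by apply/allP.
Qed.


Lemma tw_raise (V : finType) (T : nat) (A : {set tedge V T}) u s s' l :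
  (forall q, q \in A -> u \in q.1 -> s' <= val q.2) -> tw A u s l -> tw A u s' l.
Proof.
case: l => [|[y t] l] //= H [H1 H2 H3]; split=> //.
by apply: (H _ H1); rewrite /= !inE eqxx.
Qed.

Lemma ext_lemma (V : finType) (T : nat) (A : {set tedge V T}) (u x : V) (e : tedge V T) :
  e \in A -> e.1 = [set u; x] -> u != x ->
  (forall q, q \in A -> u \in q.1 -> q != e -> val e.2 < val q.2) ->
  forall w, treach A u 0 w -> treach A x (val e.2) w.
Proof.
move=> eA e1 ux Hmin w [l [H1 H2 H3]].
have He : ([set x; u], e.2) \in A by rewrite setUC -e1 -surjective_pairing.
case: l H1 H2 H3 => [|[y t] l] H1 H2 H3.
  by exists [:: (u, e.2)]; split=> //=; rewrite inE andbT eq_sym.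
have Hq : ([set u; y], t) \in A by case: H1.
have Hge : forall q, q \in A -> u \in q.1 -> val e.2 <= val q.2.
  move=> q qA uq; case: (eqVneq q e) => [->//|qe].
  exact: ltnW (Hmin q qA uq qe).
case Hx: (x \in map fst ((y, t) :: l)).
  have H1' := tw_raise Hge H1.
  have := tw_suffix H1' H2 Hx; rewrite H3; apply: treach_mono; exact: leqnSn.
have Hyx : y != x by apply: contraFN Hx => /eqP ->; rewrite /= inE eqxx.
have Hyu : y != u by move: H2; rewrite /= inE negb_or eq_sym => /andP [/andP [] ].
have Hqe : ([set u; y], t) != e.
  apply/eqP => Hqe; move: Hyx; rewrite -Hqe /= in e1.
  have : y \in [set u; x] by rewrite -e1 !inE eqxx orbT.
  by rewrite !inE (negbTE Hyu) /= => ->.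
have Hin : u \in ([set u; y], t).1 by rewrite /= !inE eqxx.
have Hlt := Hmin _ Hq Hin Hqe.
exists ((u, e.2) :: (y, t) :: l); split.
- case: H1 => [_ _ H1]; split=> //; split=> //.
- rewrite /= in H2 *; rewrite H2 andbT.
  move: Hx; rewrite /= !inE negb_or => ->; by rewrite eq_sym ux.
- by rewrite -H3.
Qed.

Lemma pre_lemma (V : finType) (T : nat) (A : {set tedge V T}) (u x : V) (e : tedge V T) :
  e \in A -> e.1 = [set u; x] -> u != x ->
  forall w, treach A x (val e.2).+1 w -> treach A u 0 w.
Proof.
move=> eA e1 ux w [l [H1 H2 H3]].
case Hu: (u \in map fst l).
  have := tw_suffix H1 H2 Hu; rewrite H3; apply: treach_mono; exact: leq0n.
exists ((x, e.2) :: l); split=> //.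
- split=> //; by rewrite -e1 -surjective_pairing.
- by rewrite /= in H2 *; rewrite H2 andbT inE negb_or ux Hu.
Qed.


Lemma nxt_ge (V : finType) (T : nat) (A : {set tedge V T}) l u s :
  tw A u s l -> s <= nxt s l.
Proof.
elim: l u s => [|[y t] l IH] u s //= [H1 H2 H3].
rewrite /nxt /=; apply: leq_trans (IH _ _ H3); exact: leqW.
Qed.

Lemma nxt_cons (V : finType) (T : nat) s (y : V) (t : 'I_T.+1) l :
  nxt s ((y, t) :: l) = nxt t.+1 l.
Proof. by []. Qed.

Lemma nxt_rcons (V : finType) (T : nat) s (l : seq (V * 'I_T.+1)) q :
  nxt s (rcons l q) = (val q.2).+1.
Proof. by rewrite /nxt map_rcons last_rcons. Qed.

Lemma set2_eq (V : finType) (a b c d : V) :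
  [set a; b] = [set c; d] -> (a = c /\ b = d) \/ (a = d /\ b = c).
Proof.
move=> E.
have Ha : a \in [set c; d] by rewrite -E !inE eqxx.
have Hb : b \in [set c; d] by rewrite -E !inE eqxx orbT.
have Hc : c \in [set a; b] by rewrite E !inE eqxx.
have Hd : d \in [set a; b] by rewrite E !inE eqxx orbT.
case/set2P: Ha => ?; case/set2P: Hb => ?; subst; try by [left | right].
- by case/set2P: Hd => ?; subst; left.
- by case/set2P: Hc => ?; subst; right.
Qed.

Lemma two_elems (V : finType) (S : {set V}) r :
  #|S| = 2 -> r \in S -> exists y, y != r /\ S = [set r; y].
Proof.
move=> HS rS.
have : 0 < #|S :\ r| by move: HS; rewrite (cardsD1 r S) rS /= add1n => -[->].
case/card_gt0P => y; rewrite !inE => /andP [yr yS].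
exists y; split=> //; apply/eqP; rewrite eq_sym eqEcard HS cards2 eq_sym yr leqnn andbT.
by apply/subsetP => z; rewrite !inE => /orP [] /eqP ->.
Qed.

Lemma tree_of_par (V : finType) (T : nat) (A : {set tedge V T}) (r : V)
  (a : V -> nat) (pf : V -> V * 'I_T.+1) :
  a r = 0 ->
  (forall w, w != r -> [/\ ([set (pf w).1; w], (pf w).2) \in A,
                          (val (pf w).2).+1 = a w & a (pf w).1 <= val (pf w).2]) ->
  let Tr := [set ([set (pf w).1; w], (pf w).2) | w in [set w | w != r]] in
  [/\ Tr \subset A, spanning_tree (underlying Tr) & forall w, treach Tr r 0 w].
Proof.
move=> ar Hp Tr.
have Hlt : forall w, w != r -> a (pf w).1 < a w.
  by move=> w wr; case: (Hp w wr) => _ <- ?; rewrite ltnS.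
have inT : forall w, w != r -> ([set (pf w).1; w], (pf w).2) \in Tr.
  by move=> w wr; apply: imset_f; rewrite inE.
have R : forall n w, a w < n -> exists l, [/\ tw Tr r 0 l, uniq (r :: map fst l),
    last r (map fst l) = w, nxt 0 l = a w & all (fun z => a z <= a w) (map fst l)].
  elim=> [//|n IH] w Hw.
  case: (eqVneq w r) => [->|wr]; first by exists [::]; split=> //; rewrite ar.
  have [l [H1 H2 H3 H4 H5]] := IH (pf w).1 (leq_trans (Hlt w wr) Hw).
  case: (Hp w wr) => P1 P2 P3.
  exists (rcons l (w, (pf w).2)); split.
  - apply/tw_rcons; split=> //; first by rewrite H3; exact: inT.
    by rewrite H4.
  - rewrite map_rcons -rcons_cons rcons_uniq H2 andbT /= inE negb_or wr /=.
    apply/negP => /(allP H5) /= Hz.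
    by have := leq_ltn_trans Hz (Hlt w wr); rewrite ltnn.
  - by rewrite map_rcons last_rcons.
  - by rewrite nxt_rcons /= P2.
  - rewrite map_rcons all_rcons leqnn /=; apply/allP => z /(allP H5) hz.
    exact: leq_trans hz (ltnW (Hlt w wr)).
split.
- apply/subsetP => q /imsetP [w]; rewrite inE => wr ->.
  by case: (Hp w wr).
- pose er := fun x y : V => [set x; y] \in underlying Tr.
  have erS : symmetric er by move=> x y; rewrite /er setUC.
  have erP : forall w, w != r -> er w (pf w).1.
    move=> w wr; rewrite /er setUC; apply/imsetP.
    by exists ([set (pf w).1; w], (pf w).2); first exact: inT.
  have C : forall n w, a w < n -> connect er w r.
    elim=> [//|n IH] w Hw.
    case: (eqVneq w r) => [->|wr]; first exact: connect0.
    apply: connect_trans (connect1 (erP w wr)) _.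
    exact: IH (leq_trans (Hlt w wr) Hw).
  have er_par : forall y z, er y z ->
      (z = (pf y).1 /\ y != r) \/ (y = (pf z).1 /\ z != r).
    move=> y z /imsetP [q /imsetP [w]]; rewrite inE => wr -> /= E.
    case: (set2_eq E) => [[-> ->]|[-> ->]]; first by right.
    by left.
  split.
  + move=> u v.
    have : connect er u v.
      apply: connect_trans (C _ u (ltnSn _)) _.
      by rewrite (sym_connect_sym erS); exact: C _ v (ltnSn _).
    case/connectP => p Hp' ->.
    case: (shortenP Hp') => p' Hp'' Hu _.
    exists p'; split=> //.
    by move=> i Hi; move/(pathP u): Hp'' => H; exact: H i Hi.
  + move=> x xs Hsz Hu He; apply/negP => Hc.
    have Hpath : path er x xs by apply/(pathP x) => i Hi; exact: He i Hi.
    have Hcy : cycle er (x :: xs) by rewrite /= rcons_path Hpath; exact: Hc.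
    have xc : x \in x :: xs by rewrite inE eqxx.
    case: (arg_maxnP a xc) => z zc zmax.
    have Hrot := rot_index zc.
    move: (Hcy) (Hu); rewrite -(rot_cycle (index z (x :: xs))) -(rot_uniq (index z (x :: xs))).
    have Hmem := mem_rot (index z (x :: xs)) (x :: xs).
    have Hsz' := size_rot (index z (x :: xs)) (x :: xs).
    move: Hmem Hsz'; rewrite Hrot.
    set rest := (drop _ _ ++ take _ _) => Hmem Hsz'.
    case: rest Hmem Hsz' => [|y1 rest'] Hmem Hsz'; first by rewrite /= in Hsz'; move: Hsz; rewrite -ltnS -Hsz'.
    case/lastP: rest' Hmem Hsz' => [|r'' y2] Hmem Hsz'.
      by rewrite /= in Hsz'; move: Hsz; rewrite -ltnS -Hsz'.
    rewrite /= rcons_path last_rcons => /and3P [e1 _ e2] /and3P [_ Hy1 _].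
    have Hmax : forall y, y \in z :: y1 :: rcons r'' y2 -> a y <= a z.
      by move=> y; rewrite Hmem => /zmax.
    have E1 : y1 = (pf z).1.
      case: (er_par _ _ e1) => [[]//|[Hz Hy]].
      have := Hlt _ Hy; rewrite -Hz => H.
      have := Hmax y1; rewrite !inE eqxx orbT => /(_ isT) H'.
      by have := leq_trans H H'; rewrite ltnn.
    have E2 : y2 = (pf z).1.
      case: (er_par _ _ e2) => [[Hz Hy]|[]//].
      have := Hlt _ Hy; rewrite -Hz => H.
      have := Hmax y2; rewrite !inE mem_rcons inE eqxx !orbT => /(_ isT) H'.
      by have := leq_trans H H'; rewrite ltnn.
    by move: Hy1; rewrite E1 -E2 mem_rcons inE eqxx.
- by move=> w; have [l [H1 H2 H3 _ _]] := R _ w (ltnSn _); exists l.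
Qed.


Lemma foremost (V : finType) (T : nat) (A : {set tedge V T}) (r : V) :
  (forall p, p \in A -> #|p.1| = 2) ->
  (forall e e' (t : 'I_T.+1), (e, t) \in A -> (e', t) \in A -> e != e' ->
     [disjoint e & e']) ->
  (forall w, treach A r 0 w) ->
  exists Tr : {set tedge V T}, [/\ Tr \subset A, spanning_tree (underlying Tr),
    forall w, treach Tr r 0 w &
    forall p, p \in A -> r \in p.1 ->
      (forall q, q \in A -> r \in q.1 -> val p.2 <= val q.2) -> p \in Tr].
Proof.
move=> Hsize Hhap Hr.
pose Q w n := exists l, [/\ tw A r 0 l, uniq (r :: map fst l),
                          last r (map fst l) = w & nxt 0 l = n].
pose pb (P : Prop) := if excluded_middle_informative P then true else false.
have pbP : forall P : Prop, reflect P (pb P).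
  by move=> P; rewrite /pb; case: excluded_middle_informative => H; constructor.
have Hex : forall w, exists n, pb (Q w n).
  move=> w; have [l [H1 H2 H3]] := Hr w; exists (nxt 0 l); apply/pbP.
  by exists l.
pose a w := ex_minn (Hex w).
have aP : forall w, Q w (a w).
  by move=> w; rewrite /a; case: ex_minnP => n /pbP.
have amin : forall w n, Q w n -> a w <= n.
  by move=> w n Hq; rewrite /a; case: ex_minnP => m _ Hm; apply: Hm; apply/pbP.
have ar : a r = 0.
  by apply/eqP; rewrite -leqn0; apply: amin; exists [::].
have Hpar : forall w, exists yt : V * 'I_T.+1, w != r ->
    [/\ ([set yt.1; w], yt.2) \in A, (val yt.2).+1 = a w & a yt.1 <= val yt.2].
  move=> w; case: (eqVneq w r) => [->|wr]; first by exists (r, ord0) => /eqP.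
  have [l [H1 H2 H3 H4]] := aP w.
  case/lastP: l H1 H2 H3 H4 => [|l [z t]] H1 H2 H3 H4.
    by move: wr; rewrite -H3 eqxx.
  rewrite map_rcons last_rcons /= in H3; subst z.
  case/tw_rcons: H1 => H1 He Hn.
  exists (last r (map fst l), t) => _; split=> //.
    by rewrite -H4 nxt_rcons.
  apply: leq_trans (amin _ _ _) Hn; exists l; split=> //.
  by move: H2; rewrite map_rcons -rcons_cons rcons_uniq => /andP [].
pose pf w := proj1_sig (constructive_indefinite_description _ (Hpar w)).
have pfP : forall w, w != r -> [/\ ([set (pf w).1; w], (pf w).2) \in A,
                          (val (pf w).2).+1 = a w & a (pf w).1 <= val (pf w).2].
  by move=> w; rewrite /pf; case: constructive_indefinite_description.
have [Hsub Hsp Hre] := tree_of_par ar pfP.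
exists [set ([set (pf w).1; w], (pf w).2) | w in [set w | w != r]]; split=> //.
move=> p pA rp Hmin.
have [y [yr Ey]] := two_elems (Hsize p pA) rp.
have ay : a y = (val p.2).+1.
  apply/eqP; rewrite eqn_leq; apply/andP; split.
  - apply: amin; exists [:: (y, p.2)]; split=> //=.
    + by rewrite -Ey -surjective_pairing.
    + by rewrite inE andbT eq_sym.
  - have [l [H1 H2 H3 H4]] := aP y; rewrite -H4.
    case: l H1 H2 H3 H4 => [|[z t] l] H1 H2 H3 H4.
      by move: yr; rewrite -H3 eqxx.
    case: H1 => Hz _ Ht; rewrite nxt_cons.
    apply: leq_trans (nxt_ge Ht); rewrite ltnS; apply: Hmin Hz _.
    by rewrite /= !inE eqxx.
case: (pfP y yr) => P1 P2 P3.
have Et : (pf y).2 = p.2 by apply: val_inj; apply/succn_inj; rewrite P2 ay.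
have Er : (pf y).1 = r.
  case: (eqVneq (pf y).1 r) => // Hne; exfalso.
  rewrite Et in P1.
  have Hne' : [set (pf y).1; y] != p.1.
    apply/negP => /eqP E.
    have : r \in [set (pf y).1; y] by rewrite E.
    by rewrite !inE eq_sym (negbTE Hne) eq_sym (negbTE yr).
  have := Hhap _ _ _ P1 _ Hne'; rewrite -surjective_pairing => /(_ pA).
  move/disjointFr => /(_ y); rewrite !inE eqxx orbT => /(_ isT).
  by rewrite Ey !inE eqxx orbT.
have -> : p = ([set (pf y).1; y], (pf y).2).
  by rewrite Er Et -Ey -surjective_pairing.
by apply: imset_f; rewrite inE.
Qed.


Lemma min_strict (V : finType) (T : nat) (A : {set tedge V T}) (u : V) (e : tedge V T) :
  (forall e e' (t : 'I_T.+1), (e, t) \in A -> (e', t) \in A -> e != e' ->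
     [disjoint e & e']) ->
  e \in A -> u \in e.1 -> (forall q, q \in A -> u \in q.1 -> val e.2 <= val q.2) ->
  forall q, q \in A -> u \in q.1 -> q != e -> val e.2 < val q.2.
Proof.
move=> Hhap eA ue Hmin q qA uq qe; rewrite ltn_neqAle Hmin // andbT.
apply/negP => /eqP /val_inj Et.
case: (eqVneq e.1 q.1) => E1.
  by move: qe; case: q E1 Et {qA uq} => [q1 q2] /= <- <-; rewrite -surjective_pairing eqxx.
have := Hhap _ _ e.2 _ _ E1; rewrite -surjective_pairing => /(_ eA).
rewrite Et -surjective_pairing => /(_ qA) /disjointFr /(_ ue).
by rewrite uq.
Qed.

Lemma tpath_sub (V : finType) (T : nat) (A B : {set tedge V T}) u v :
  A \subset B -> tpath A u v -> tpath B u v.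
Proof.
by move=> AB /tpath_treach H; apply: treach_tpath; exact: treach_sub AB H.
Qed.

Theorem lemma13 (V : finType) (T : nat) (E : {set tedge V T}) (X : {set V})
    (S : {set tedge V T}) :
  happy E -> tconnected E -> vertex_cover E X -> min_tspanner E S ->
  exists k : nat, k <= #|X| /\
    exists (r : 'I_k -> V) (F : 'I_k -> {set tedge V T})
           (g : V -> option (tedge V T)),
      [/\ forall i, r i \in X,
          forall i, out_tree E (r i) (F i),
          forall v p, g v = Some p -> v \notin X /\ v \in p.1
        & S = (\bigcup_(i < k) F i) :|: [set p | [exists v, g v == Some p]]].
Proof.
move=> [Hwf Hone Hadj] Hconn Hvc [[SE Sconn] Smin].
have Ssize : forall p, p \in S -> #|p.1| = 2.
  by move=> p pS; have [H _] := Hwf p (subsetP SE p pS).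
have Shap : forall e e' (t : 'I_T.+1), (e, t) \in S -> (e', t) \in S -> e != e' ->
     [disjoint e & e'].
  by move=> e e' t H1 H2; apply: Hadj; [exact: (subsetP SE _ H1) | exact: (subsetP SE _ H2)].
have Sreach : forall u w, treach S u 0 w.
  move=> u w; case: (eqVneq u w) => [->|uw]; first by exists [::].
  exact: tpath_treach (Sconn u w uw).
pose g := fun u => if u \in X then None else
  [pick p in S | (u \in p.1) && [forall q in S, (u \in q.1) ==> (val p.2 <= val q.2)]].
have gP : forall u p, g u = Some p ->
    [/\ u \notin X, p \in S, u \in p.1 &
        forall q, q \in S -> u \in q.1 -> val p.2 <= val q.2].
  move=> u p; rewrite /g; case: (u \in X) => //.
  case: pickP => // q /andP [qS /andP [uq /forall_inP Hq]] [<-].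
  by split=> // q' q'S uq'; apply: (implyP (Hq q' q'S)).
have gSome : forall u q, u \notin X -> q \in S -> u \in q.1 -> exists p, g u = Some p.
  move=> u q uX qS uq; rewrite /g (negbTE uX).
  case: pickP => [p _|Hn]; first by exists p.
  have Pq : (q \in S) && (u \in q.1) by rewrite qS uq.
  case: (@arg_minnP _ q (fun p : tedge V T => (p \in S) && (u \in p.1)) (fun p : tedge V T => val p.2) Pq) => p /andP [pS up] pmin.
  have := Hn p; rewrite /= pS up /=; move/negP; case.
  apply/forall_inP => q' q'S; apply/implyP => uq'; apply: pmin; by rewrite q'S uq'.

have HT : forall x, exists Tx : {set tedge V T}, x \in X ->
   [/\ Tx \subset S, out_tree E x Tx &
       forall u p, g u = Some p -> x \in p.1 ->
         forall w, treach (Tx :|: [set p]) u 0 w].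
  move=> x; case xX: (x \in X); last by exists set0.
  pose U := [set u | if g u is Some p then x \in p.1 else false].
  case: (set_0Vmem U) => [U0 | [u0 u0U]].
  - have [Tr [TS Tsp Tre _]] := foremost Ssize Shap (Sreach x).
    exists Tr => _; split=> //.
    + split=> //; first exact: subset_trans TS SE.
      by move=> v _; exact: treach_tpath (Tre v).
    + move=> u p gu xp; have : u \in U by rewrite inE gu.
      by rewrite U0 inE.
  - pose lab u := if g u is Some p then val p.2 else 0.
    case: (@arg_maxnP _ u0 (fun u => u \in U) lab u0U) => us usU usmax.
    move: (usU); rewrite inE; case Egs: (g us) => [ps|//] xps.
    have [usX psS usps psmin] := gP _ _ Egs.
    have usx : us != x by apply: contraNneq usX => ->.
    have [y [yus Ey]] := two_elems (Ssize _ psS) usps.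
    have Eps : ps.1 = [set us; x].
      move: xps; rewrite Ey !inE eq_sym (negbTE usx) /= => /eqP ->.
      by [].
    have [Tr [TS Tsp Tre Tmin]] := foremost Ssize Shap (Sreach us).
    have psT : ps \in Tr by apply: Tmin.
    have Hstrict : forall A : {set tedge V T}, A \subset S ->
        forall q, q \in A -> us \in q.1 -> q != ps -> val ps.2 < val q.2.
      move=> A AS q qA uq qps.
      exact: (min_strict Shap psS usps psmin (subsetP AS _ qA) uq qps).
    exists Tr => _; split=> //.
    + split=> //; first exact: subset_trans TS SE.
      move=> v _; apply: treach_tpath.
      exact: (ext_lemma psT Eps usx (Hstrict _ TS) (Tre v)).
    + move=> u p gu xp w.
      have [uX pS up pmin] := gP _ _ gu.
      have AS : Tr :|: [set p] \subset S.
        by apply/subsetP => q; rewrite !inE => /orP [/(subsetP TS)|/eqP ->].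
      case: (eqVneq u us) => [Eu|uus].
        have Ep : p = ps by move: gu; rewrite Eu Egs => -[].
        by rewrite Eu; apply: treach_sub (Tre w); apply/subsetP => q qT; rewrite inE qT.
      have ux : u != x by apply: contraNneq uX => ->.
      have [y' [y'u Ey']] := two_elems (Ssize _ pS) up.
      have Ep1 : p.1 = [set u; x].
        move: xp; rewrite Ey' !inE eq_sym (negbTE ux) /= => /eqP ->.
        by [].
      have Hle : val p.2 <= val ps.2.
        have := usmax u; rewrite inE gu xp /lab gu Egs; by apply.
      have Hlt : val p.2 < val ps.2.
        rewrite ltn_neqAle Hle andbT; apply/negP => /eqP /val_inj Et.
        have Hne : p.1 != ps.1.
          apply/negP => /eqP E1; have : us \in p.1 by rewrite E1.
          by rewrite Ep1 !inE eq_sym (negbTE uus) (negbTE usx).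
        have := Shap _ _ p.2 _ _ Hne; rewrite -surjective_pairing => /(_ pS).
        rewrite Et -surjective_pairing => /(_ psS) /disjointFr /(_ xp).
        by rewrite Eps !inE eqxx orbT.
      have psA : ps \in Tr :|: [set p] by rewrite inE psT.
      have pA : p \in Tr :|: [set p] by rewrite !inE eqxx orbT.
      have H1 : treach (Tr :|: [set p]) us 0 w.
        by apply: treach_sub (Tre w); apply/subsetP => q qT; rewrite inE qT.
      have H2 := ext_lemma psA Eps usx (Hstrict _ AS) H1.
      have H3 := treach_mono Hlt H2.
      have HH := pre_lemma pA Ep1 ux H3. exact: HH.
pose Tf x := proj1_sig (constructive_indefinite_description _ (HT x)).
have TfP : forall x, x \in X -> 
   [/\ Tf x \subset S, out_tree E x (Tf x) &
       forall u p, g u = Some p -> x \in p.1 ->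
         forall w, treach (Tf x :|: [set p]) u 0 w].
  by move=> x; rewrite /Tf; case: constructive_indefinite_description.
pose S' := (\bigcup_(i < #|X|) Tf (enum_val i)) :|: [set p | [exists v, g v == Some p]].
have TfS' : forall x, x \in X -> Tf x \subset S'.
  move=> x xX; apply/subsetP => q qT; rewrite inE; apply/orP; left.
  apply/bigcupP; exists (enum_rank_in xX x) => //.
  by rewrite enum_rankK_in.
have gS' : forall u p, g u = Some p -> p \in S'.
  move=> u p gu; rewrite !inE; apply/orP; right; apply/existsP; exists u.
  by rewrite gu.
have S'S : S' \subset S.
  apply/subsetP => q; rewrite inE => /orP [/bigcupP [i _ qi]|].
    by case: (TfP _ (enum_valP i)) => [/subsetP H _ _]; apply: H.
  rewrite inE => /existsP [v /eqP gv].
  by case: (gP _ _ gv).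
have S'conn : tconnected S'.
  move=> a b ab; case aX: (a \in X).
    case: (TfP _ aX) => _ [_ _ Hp] _.
    have HH := tpath_sub (TfS' _ aX) (Hp b (ltac:(by rewrite eq_sym))). exact: HH.
  have [l [H1 H2 H3]] := Sreach a b.
  case: l H1 H2 H3 => [|[y t] l] H1 H2 H3; first by move: ab; rewrite -H3 eqxx.
  have qS : ([set a; y], t) \in S by case: H1.
  have aq : a \in ([set a; y], t).1 by rewrite /= !inE eqxx.
  have [p gp] := gSome a _ (negbT aX) qS aq.
  have [_ pS ap _] := gP _ _ gp.
  have := Hvc p (subsetP SE p pS); rewrite -setI_eq0 => /set0Pn [x].
  rewrite inE => /andP [xp xX].
  case: (TfP _ xX) => _ _ /(_ a p gp xp b) Hr.
  apply: treach_tpath; apply: treach_sub Hr.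
  apply/subsetP => q; rewrite in_setU in_set1 => /orP [/(subsetP (TfS' _ xX))//|/eqP ->].
  exact: (gS' _ _ gp).
have HS' : #|S| <= #|S'| by apply: Smin; split=> //; exact: subset_trans S'S SE.
have ES : S' = S by apply/eqP; rewrite eqEcard S'S HS'.
exists #|X|; split=> //.
exists (fun i => enum_val i), (fun i => Tf (enum_val i)), g; split.
- by move=> i; exact: enum_valP.
- by move=> i; case: (TfP _ (enum_valP i)).
- by move=> v p /gP [].
- by rewrite -ES.
Qed.
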